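(* Let $\bm A\in\mathbb R^{m\times n}$, let $\bm D\in\mathbb R^{n\times d}$ with $\bm D\bm D^\top=\bm I_n$, let $0<\alpha\le1$, $\lambda>0$, and let $\bm b=\bm A\bm x+\bm e$ with $\bm x\in\mathbb R^n$ and $\|\bm e\|_2\le\lambda$. Let $t$ be a positive integer and let $T\subseteq\{1,\dots,d\}$ be an index set of $t$ largest-magnitude entries of $\bm D^\top\bm x$. Let $\hat{\bm x}$ be a minimizer of $$\min_{\bm x\in\mathbb R^n}\ \lambda\big(\|\bm D^\top\bm x\|_1-\alpha\|\bm D^\top\bm x\|_2\big)+\tfrac12\|\bm A\bm x-\bm b\|_2^2,$$ and set $\bm h=\hat{\bm x}-\bm x$. Then $$\|\bm A\bm h\|_2^2+2\lambda\|\bm D_{T^c}^\top\bm h\|_1\le2\lambda\big(\|\bm D_T^\top\bm h\|_1+\alpha\|\bm D^\top\bm h\|_2+2\|\bm D_{T^c}^\top\bm x\|_1+\|\bm A\bm h\|_2\big),$$ $$\|\bm A\bm h\|_2^2+2\lambda\big(\|\bm D_{T^c}^\top\bm h\|_1-\alpha\|\bm D_{T^c}^\top\bm h\|_2\big)\le2\lambda\big(\|\bm D_T^\top\bm h\|_1+2\|\bm D_{T^c}^\top\bm x\|_1+\alpha\|\bm D_T^\top\bm h\|_2+\|\bm A\bm h\|_2\big),$$ $$\|\bm D_{T^c}^\top\bm h\|_1\le\|\bm D_T^\top\bm h\|_1+2\|\bm D_{T^c}^\top\bm x\|_1+\alpha\|\bm D^\top\bm h\|_2+\|\bm A\bm h\|_2,$$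 and $$\|\bm A\bm h\|_2^2\le2\lambda\big(\|\bm D_T^\top\bm h\|_1+2\|\bm D_{T^c}^\top\bm x\|_1+\alpha\|\bm D^\top\bm h\|_2+\|\bm A\bm h\|_2\big).$$
   Context: For an index set $S\subseteq\{1,\dots,d\}$, $S^c$ is its complement in $\{1,\dots,d\}$ and $\bm D_S$ denotes the matrix $\bm D$ with all columns not indexed by $S$ set to zero; thus $\bm D_S^\top\bm h$ is the vector $\bm D^\top\bm h$ with the entries outside $S$ set to zero. *)

(* Defs.v *)
From HB Require Import structures.
From mathcomp Require Import all_boot all_order all_algebra.
From mathcomp Require Import reals.
Set Implicit Arguments. Unset Strict Implicit. Unset Printing Implicit Defensive.
Import Order.TTheory GRing.Theory Num.Theory.
Local Open Scope ring_scope.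

Definition norm1 (R : realType) (k : nat) (v : 'cV[R]_k) : R :=
  \sum_(i < k) `|v i 0|.

Definition norm2 (R : realType) (k : nat) (v : 'cV[R]_k) : R :=
  Num.sqrt (\sum_(i < k) (v i 0) ^+ 2).

(* restrict S v : entries of v outside S set to zero; so
   restrict S (D^T *m h) = D_S^T h. *)
Definition restrict (R : realType) (k : nat) (S : {set 'I_k}) (v : 'cV[R]_k)
  : 'cV[R]_k := \col_i (if i \in S then v i 0 else 0).

Definition objective (R : realType) (m n d : nat) (A : 'M[R]_(m, n))
  (D : 'M[R]_(n, d)) (alpha lambda : R) (b : 'cV[R]_m) (z : 'cV[R]_n) : R :=
  lambda * (norm1 (D^T *m z) - alpha * norm2 (D^T *m z))
  + 2^-1 * (norm2 (A *m z - b)) ^+ 2.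

Definition largest_entries (R : realType) (k : nat) (t : nat)
  (T : {set 'I_k}) (v : 'cV[R]_k) : Prop :=
  #|T| = t /\ forall i j, i \in T -> j \notin T -> `|v j 0| <= `|v i 0|.

(* Main.v *)
Require Import Defs.
From HB Require Import structures.
From mathcomp Require Import all_boot all_order all_algebra.
From mathcomp Require Import reals ring lra.
Import Order.TTheory GRing.Theory Num.Theory.
Local Open Scope ring_scope.

Section H.
Variable R : realType.

Lemma cs_sq k (a b : 'I_k -> R) :
  (\sum_i a i * b i) ^+ 2 <= (\sum_i a i ^+ 2) * (\sum_i b i ^+ 2).
Proof.
have E : (\sum_i \sum_j (a i * b j - a j * b i) ^+ 2)
  = 2 * ((\sum_i a i ^+ 2) * (\sum_i b i ^+ 2) - (\sum_i a i * b i) ^+ 2).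
  rewrite expr2 !big_distrl /=.
  have -> : \sum_i \sum_j (a i * b j - a j * b i) ^+ 2 =
     \sum_i \sum_j (a i ^+2 * b j ^+ 2) + \sum_i \sum_j (a j ^+2 * b i ^+ 2)
     - 2 * \sum_i \sum_j (a i * b i * (a j * b j)).
    rewrite big_distrr /= -big_split /= -sumrB; apply: eq_bigr => i _.
    rewrite big_distrr /= -big_split /= -sumrB; apply: eq_bigr => j _.
    ring.
  rewrite [\sum_i \sum_j (a j ^+ 2 * b i ^+ 2)]exchange_big /=.
  rewrite mulrBr; congr (_ - _); last first.
    congr (_ * _); apply: eq_bigr => i _; rewrite big_distrr /=.
    by apply: eq_bigr => j _.
  rewrite mulr_natl mulr2n; congr (_ + _); apply: eq_bigr => i _;
    rewrite big_distrr /=; apply: eq_bigr => j _; ring.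
have : 0 <= \sum_i \sum_j (a i * b j - a j * b i) ^+ 2.
  by apply: sumr_ge0 => i _; apply: sumr_ge0 => j _; exact: sqr_ge0.
rewrite E pmulr_rge0 // subr_ge0 //.
Qed.

Lemma dot_le k (a b : 'I_k -> R) :
  \sum_i a i * b i <= Num.sqrt (\sum_i a i ^+ 2) * Num.sqrt (\sum_i b i ^+ 2).
Proof.
rewrite -sqrtrM; last by apply: sumr_ge0 => i _; exact: sqr_ge0.
apply: le_trans (ler_norm _) _.
rewrite -sqrtr_sqr ler_sqrt ?cs_sq //.
by apply: mulr_ge0; apply: sumr_ge0 => i _; exact: sqr_ge0.
Qed.

Lemma mink k (a b : 'I_k -> R) :
  Num.sqrt (\sum_i (a i + b i) ^+ 2) <=
  Num.sqrt (\sum_i a i ^+ 2) + Num.sqrt (\sum_i b i ^+ 2).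
Proof.
have Ha : 0 <= \sum_i a i ^+ 2 by apply: sumr_ge0 => i _; exact: sqr_ge0.
have Hb : 0 <= \sum_i b i ^+ 2 by apply: sumr_ge0 => i _; exact: sqr_ge0.
rewrite -[X in _ <= X]ger0_norm ?addr_ge0 ?sqrtr_ge0 // -sqrtr_sqr ler_sqrt ?sqr_ge0 //.
have -> : \sum_i (a i + b i) ^+ 2 = \sum_i a i ^+ 2 + 2 * \sum_i a i * b i + \sum_i b i ^+ 2.
  rewrite big_distrr /= -!big_split /=; apply: eq_bigr => i _; ring.
have := @dot_le k a b.
rewrite sqrrD !sqr_sqrtr //.
lra.
Qed.
End H.
Lemma l1_bound (R : realType) k (T : {set 'I_k}) (u v : 'cV[R]_k) :
  norm1 u - norm1 (u + v) <=
  norm1 (restrict T v) + 2 * norm1 (restrict (~: T) u) - norm1 (restrict (~: T) v).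
Proof.
rewrite /norm1 /restrict big_distrr /= -!sumrB -big_split /= -sumrB.
apply: ler_sum => i _; rewrite !mxE inE.
have t1 := ler_normD (u i 0 + v i 0) (- v i 0).
rewrite normrN addrK in t1.
have t2 := ler_normD (u i 0 + v i 0) (- u i 0).
rewrite normrN addrAC subrr add0r in t2.
case: (i \in T) => /=; rewrite ?normr0. all: lra.
Qed.

Lemma norm2D (R : realType) k (u v : 'cV[R]_k) : norm2 (u + v) <= norm2 u + norm2 v.
Proof.
rewrite /norm2.
have -> : \sum_(i < k) (u + v) i 0 ^+ 2 = \sum_(i < k) (u i 0 + v i 0) ^+ 2.
  by apply: eq_bigr => i _; rewrite mxE.
exact: mink.
Qed.

Lemma norm2_ge0 (R : realType) k (u : 'cV[R]_k) : 0 <= norm2 u.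
Proof. exact: sqrtr_ge0. Qed.

Lemma norm1_ge0 (R : realType) k (u : 'cV[R]_k) : 0 <= norm1 u.
Proof. by apply: sumr_ge0 => i _. Qed.

Lemma norm2_sq (R : realType) k (u : 'cV[R]_k) : norm2 u ^+ 2 = \sum_i u i 0 ^+ 2.
Proof. by rewrite /norm2 sqr_sqrtr //; apply: sumr_ge0 => i _; exact: sqr_ge0. Qed.

Lemma norm2N (R : realType) k (u : 'cV[R]_k) : norm2 (- u) = norm2 u.
Proof. by rewrite /norm2; congr Num.sqrt; apply: eq_bigr => i _; rewrite mxE sqrrN. Qed.

Lemma norm2B_sq (R : realType) k (u v : 'cV[R]_k) :
  norm2 (u - v) ^+ 2 = norm2 u ^+ 2 - 2 * \sum_i u i 0 * v i 0 + norm2 v ^+ 2.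
Proof.
rewrite !norm2_sq big_distrr /= -sumrB -big_split /=.
by apply: eq_bigr => i _; rewrite !mxE; ring.
Qed.

Lemma restrict_split (R : realType) k (T : {set 'I_k}) (v : 'cV[R]_k) :
  v = restrict T v + restrict (~: T) v.
Proof.
apply/matrixP => i j; rewrite !mxE inE (ord1 j).
by case: (i \in T) => /=; rewrite ?addr0 ?add0r.
Qed.

Theorem lemma2 (R : realType) (m n d : nat) (A : 'M[R]_(m, n))
  (D : 'M[R]_(n, d)) (alpha lambda : R) (x : 'cV[R]_n) (e b : 'cV[R]_m)
  (t : nat) (T : {set 'I_d}) (xhat : 'cV[R]_n) :
  D *m D^T = 1%:M ->
  0 < alpha -> alpha <= 1 -> 0 < lambda ->
  b = A *m x + e -> norm2 e <= lambda ->
  (0 < t)%N -> largest_entries t T (D^T *m x) ->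
  (forall z : 'cV[R]_n, objective A D alpha lambda b xhat
                         <= objective A D alpha lambda b z) ->
  let h := xhat - x in
  let DTh := norm1 (restrict T (D^T *m h)) in
  let DTch := norm1 (restrict (~: T) (D^T *m h)) in
  let DTcx := norm1 (restrict (~: T) (D^T *m x)) in
  let Ah := norm2 (A *m h) in
  [/\ Ah ^+ 2 + 2 * lambda * DTch
        <= 2 * lambda * (DTh + alpha * norm2 (D^T *m h) + 2 * DTcx + Ah),
      Ah ^+ 2 + 2 * lambda * (DTch - alpha * norm2 (restrict (~: T) (D^T *m h)))
        <= 2 * lambda * (DTh + 2 * DTcx + alpha * norm2 (restrict T (D^T *m h)) + Ah),
      DTch <= DTh + 2 * DTcx + alpha * norm2 (D^T *m h) + Ah &
      Ah ^+ 2 <= 2 * lambda * (DTh + 2 * DTcx + alpha * norm2 (D^T *m h) + Ah)].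
Proof.
move=> _ ha ha1 hl hb he _ _ hopt h DTh DTch DTcx Ah.
have Hx := hopt x; rewrite /objective in Hx.
have E1 : A *m x - b = - e by rewrite hb opprD addrA subrr add0r.
have E2 : A *m xhat - b = A *m h - e by rewrite hb /h mulmxBr opprD addrA.
have E3 : D^T *m xhat = D^T *m x + D^T *m h by rewrite /h mulmxBr addrC subrK.
rewrite E1 E2 E3 norm2N norm2B_sq -/Ah in Hx.
have S1 := @dot_le R m (fun i => (A *m h) i 0) (fun i => e i 0).
rewrite -/(norm2 (A *m h)) -/(norm2 e) -/Ah in S1.
have Ah0 : 0 <= Ah := @norm2_ge0 _ _ _.
have S2 : Ah * norm2 e <= Ah * lambda by rewrite ler_wpM2l.
have L1 := @l1_bound _ _ T (D^T *m x) (D^T *m h).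
rewrite -/DTh -/DTch -/DTcx in L1.
have L1' := ler_wpM2l (ltW hl) L1.
have N2 := @norm2D _ _ (D^T *m x) (D^T *m h).
have la0 : 0 <= lambda * alpha by rewrite mulr_ge0 // ltW.
have N2' := ler_wpM2l la0 N2.
have N3 := @norm2D _ _ (restrict T (D^T *m h)) (restrict (~: T) (D^T *m h)).
rewrite -(@restrict_split _ _ _ (D^T *m h)) in N3.
have N3' := ler_wpM2l la0 N3.
have Dch0 : 0 <= lambda * DTch by apply: mulr_ge0; [exact: ltW | exact: (@norm1_ge0 _ _ _)].
have K : Ah ^+ 2 <= 2 * lambda * (DTh + 2 * DTcx - DTch + alpha * norm2 (D^T *m h) + Ah).
  lra.
clear -K Dch0 N3' hl Ah0.
split.
- lra.
- lra.
- rewrite -(ler_pM2l hl); have := sqr_ge0 Ah; lra.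
- lra.
Qed.
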